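(* Let $\rho=\sum_{i=0}^n\lambda_i|D_n^i\rangle\langle D_n^i|$ with $\lambda_i\ge0$, $\sum_i\lambda_i=1$. If $n\ge2$, then $\rho_{[2]}$ is PPT if and only if $$\Big[\sum_{i=0}^n(n-i)(n-i-1)\lambda_i\Big]\Big[\sum_{i=0}^n i(i-1)\lambda_i\Big]-\Big[\sum_{i=0}^n i(n-i)\lambda_i\Big]^2\ge0.$$ If $n\ge3$, then $\rho_{[3]}$ is PPT if and only if both $$\Big[\sum_{i=0}^n(n-i)(n-i-1)(n-i-2)\lambda_i\Big]\Big[\sum_{i=0}^n i(i-1)(n-i)\lambda_i\Big]-\Big[\sum_{i=0}^n i(n-i)(n-i-1)\lambda_i\Big]^2\ge0$$ and $$\Big[\sum_{i=0}^n i(n-i)(n-i-1)\lambda_i\Big]\Big[\sum_{i=0}^n i(i-1)(i-2)\lambda_i\Big]-\Big[\sum_{i=0}^n i(i-1)(n-i)\lambda_i\Big]^2\ge0.$$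
   Context: $\rho_{[k]}$ denotes the partial trace of $\rho$ over qubits $k+1,\dots,n$. Dicke states: $|D_n^i\rangle=\binom{n}{i}^{-1/2}\sum_{s\in\{0,1\}^n,\ \sum_js_j=i}|s_1\rangle\otimes\cdots\otimes|s_n\rangle$. An $m$-qubit state whose range lies in the subspace of vectors invariant under swapping any two qubits (a symmetric state) is called PPT if its partial transpose with respect to $\lfloor m/2\rfloor$ of its qubits is positive semidefinite. *)

(* Defs.v *)
From HB Require Import structures.
From mathcomp Require Import all_boot all_order all_algebra.
Set Implicit Arguments.
Unset Strict Implicit.
Unset Printing Implicit Defensive.
Import Order.TTheory GRing.Theory Num.Theory.
Local Open Scope ring_scope.

(* Operators on qubit systems: a matrix indexed by bit strings (seq bool).
   An m-qubit operator is only ever evaluated at indices of size m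
   (the computational basis |s_1 ... s_m>, s_j in {0,1}, bool true = 1). *)

Definition psd (C : numClosedFieldType) (m : nat)
  (M : seq bool -> seq bool -> C) : Prop :=
  forall v : m.-tuple bool -> C,
    0 <= \sum_(a : m.-tuple bool) \sum_(b : m.-tuple bool)
           (v a)^* * M a b * v b.

Definition ptrace (C : numClosedFieldType) (n k : nat)
  (M : seq bool -> seq bool -> C) : seq bool -> seq bool -> C :=
  fun a b => \sum_(t : (n - k).-tuple bool) M (a ++ t) (b ++ t).

Definition ptranspose (C : numClosedFieldType) (p : nat)
  (M : seq bool -> seq bool -> C) : seq bool -> seq bool -> C :=
  fun a b => M (take p b ++ drop p a) (take p a ++ drop p b).

(* PPT for an m-qubit (symmetric) state: partial transpose w.r.t.
   floor(m/2) of its qubits (here: the first floor(m/2)) is PSD. *)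
Definition PPT (C : numClosedFieldType) (m : nat)
  (M : seq bool -> seq bool -> C) : Prop :=
  psd m (ptranspose m./2 M).

Definition dicke (C : numClosedFieldType) (n i : nat) (s : seq bool) : C :=
  if (size s == n) && (count id s == i)
  then sqrtC (('C(n, i))%:R^-1) else 0.

Definition dicke_mixture (C : numClosedFieldType) (n : nat)
  (lam : 'I_n.+1 -> C) : seq bool -> seq bool -> C :=
  fun s t => \sum_(i < n.+1) lam i * (dicke C n i s * (dicke C n i t)^*).

(* Main.v *)
Require Import Defs.
From HB Require Import structures.
From mathcomp Require Import all_boot all_order all_algebra ring.
Import Order.TTheory GRing.Theory Num.Theory.
Local Open Scope ring_scope.

Lemma big_tuple_cons (R : nmodType) (T : finType) m (F : m.+1.-tuple T -> R) :
  \sum_(t : m.+1.-tuple T) F t = \sum_(x : T) \sum_(t : m.-tuple T) F [tuple of x :: t].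
Proof.
rewrite pair_big /=.
rewrite (reindex (fun p : T * m.-tuple T => [tuple of p.1 :: p.2])) //=.
exists (fun t => (thead t, [tuple of behead t])) => [[x t] _ | t _] /=.
  by rewrite theadE; congr pair; apply: val_inj.
by rewrite [in RHS](tuple_eta t).
Qed.

Lemma big_tuple0 (R : nmodType) (T : finType) (F : 0.-tuple T -> R) :
  \sum_(t : 0.-tuple T) F t = F [tuple].
Proof.
rewrite (big_pred1 [tuple]) // => t /=; rewrite (tuple0 t); exact: (esym (eqxx _)).
Qed.

Section S.
Variable C : numClosedFieldType.

Lemma count_sum m c i :
  \sum_(t : m.-tuple bool) ((c + count id t == i)%N%:R : C)
  = if (c <= i)%N then 'C(m, i - c)%:R else 0.
Proof.
elim: m c => [|m IH] c.
  rewrite big_tuple0 /= addn0.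
  case: ltngtP => H //=.
  - by rewrite bin0n subn_eq0 leqNgt H.
  - by rewrite H subnn bin0.
rewrite big_tuple_cons big_bool /=.
rewrite (eq_bigr (fun t : m.-tuple bool => (((c.+1) + count id t == i)%N%:R : C))); last first.
  by move=> t _; rewrite addnA addn1.
rewrite !IH.
case: (ltngtP c i) => H.
- rewrite -natrD.
  have -> : (i - c = (i - c.+1).+1)%N by rewrite subnS prednK // subn_gt0.
  by rewrite binS addnC.
- by rewrite addr0.
- by rewrite H subnn !bin0 add0r.
Qed.

Definition Ecnt n k c i : C := if (c <= i)%N then 'C(n - k, i - c)%:R else 0.
Definition Pv n (lam : 'I_n.+1 -> C) k c : C :=
  \sum_(i < n.+1) lam i * ('C(n, i)%:R^-1 * Ecnt n k c i).

Lemma sqc_mul (x : C) : 0 <= x -> sqrtC x * (sqrtC x)^* = x.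
Proof.
move=> x0; have s0 : 0 <= sqrtC x by rewrite sqrtC_ge0.
by rewrite (geC0_conj s0) -expr2 sqrtCK.
Qed.

Lemma ptrace_rho n (lam : 'I_n.+1 -> C) k (a b : seq bool) : size a = k -> size b = k -> (k <= n)%N ->
  ptrace n k (dicke_mixture lam) a b
  = if count id a == count id b then Pv n lam k (count id a) else 0.
Proof.
move=> sa sb kn; rewrite /ptrace /dicke_mixture exchange_big /=.
have sz : forall (s : seq bool) (t : (n - k).-tuple bool), size s = k -> size (s ++ t) == n.
  by move=> s t ss; rewrite size_cat size_tuple ss subnKC.
case: eqP => [eab|nab].
  rewrite /Pv; apply: eq_bigr => i _.
  rewrite -mulr_sumr; congr (_ * _).
  rewrite /Ecnt -count_sum mulr_sumr; apply: eq_bigr => t _.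
  rewrite /dicke !sz // !count_cat -eab /=.
  case: eqP => _; last by rewrite mul0r mulr0.
  by rewrite sqc_mul ?mulr1 // invr_ge0 ler0n.
rewrite big1 // => i _; rewrite big1 ?mulr0 // => t _.
rewrite /dicke !sz // !count_cat /=.
case: eqP => ha; case: eqP => hb; rewrite ?conjC0 ?mul0r ?mulr0 //.
by exfalso; apply: nab; apply: (@addIn (count id t)); rewrite ha hb.
Qed.

Definition Q (p q r x y : C) := p * (x^* * x) + q * (x^* * y + y^* * x) + r * (y^* * y).

Lemma cc_ge0 (x : C) : 0 <= x^* * x.
Proof. by rewrite mulrC mul_conjC_ge0. Qed.

Lemma quadP (p q r : C) : 0 <= p -> 0 <= q -> 0 <= r ->
  (forall x y, 0 <= Q p q r x y) <-> q ^+ 2 <= p * r.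
Proof.
move=> p0 q0 r0; split=> [H|H x y].
  have [pz|pp] := eqVneq p 0.
    have := H (- (r + 1)) q; rewrite /Q pz !rmorphN rmorphD /= conjC1 !geC0_conj //.
    have -> : 0 * (- (r + 1) * - (r + 1)) + q * (- (r + 1) * q + q * - (r + 1)) + r * (q * q)
       = - (q ^+ 2 * (r + 2)) by ring.
    rewrite oppr_ge0 mul0r => Hle.
    have r2 : 0 < r + 2 by rewrite ltr_wpDl.
    by rewrite -(pmulr_lle0 _ r2).
  have pp0 : 0 < p by rewrite lt_def pp p0.
  have := H q (- p); rewrite /Q !rmorphN /= !geC0_conj //.
  have -> : p * (q * q) + q * (q * - p + - p * q) + r * (- p * - p) = p * (p * r - q ^+ 2) by ring.
  by rewrite pmulr_rge0 // subr_ge0.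
have [pz|pp] := eqVneq p 0.
  have qz : q = 0.
    have : q ^+ 2 == 0.
      by apply/eqP/le_anti; rewrite (exprn_ge0 2 q0) andbT -(mul0r r) -pz.
    by rewrite expf_eq0 /= => /eqP.
  by rewrite /Q pz qz !mul0r !add0r mulr_ge0 // cc_ge0.
have pp0 : 0 < p by rewrite lt_def pp p0.
rewrite -(pmulr_rge0 _ pp0).
have -> : p * Q p q r x y = (p * x + q * y)^* * (p * x + q * y) + (p * r - q ^+ 2) * (y^* * y).
  rewrite rmorphD !rmorphM /= (geC0_conj p0) (geC0_conj q0) /Q; ring.
by rewrite addr_ge0 ?cc_ge0 // mulr_ge0 ?cc_ge0 // subr_ge0.
Qed.

Definition t2 (a b : bool) : 2.-tuple bool := [tuple of a :: [tuple of b :: [tuple]]].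

Lemma sum_t2 (F : 2.-tuple bool -> C) :
  \sum_(t : 2.-tuple bool) F t
  = F (t2 true true) + F (t2 true false) + F (t2 false true) + F (t2 false false).
Proof.
rewrite big_tuple_cons big_bool /= !big_tuple_cons !big_bool /= !big_tuple0 /t2.
by rewrite addrA.
Qed.

Lemma form2 n (lam : 'I_n.+1 -> C) (v : 2.-tuple bool -> C) : (2 <= n)%N ->
  \sum_(a : 2.-tuple bool) \sum_(b : 2.-tuple bool)
     (v a)^* * ptranspose 1 (ptrace n 2 (dicke_mixture lam)) a b * v b
  = Q (Pv n lam 2 0) (Pv n lam 2 1) (Pv n lam 2 2) (v (t2 false false)) (v (t2 true true))
    + Pv n lam 2 1 * ((v (t2 false true))^* * v (t2 false true))
    + Pv n lam 2 1 * ((v (t2 true false))^* * v (t2 true false)).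
Proof.
move=> n2.
rewrite sum_t2 !sum_t2 /ptranspose /=.
rewrite !ptrace_rho //= /Q /t2.
rewrite !mulr0 !mul0r !addr0 !add0r.
ring.
Qed.

Definition t3 (a b c : bool) : 3.-tuple bool := [tuple of a :: [tuple of b :: [tuple of c :: [tuple]]]].

Lemma sum_t3 (F : 3.-tuple bool -> C) :
  \sum_(t : 3.-tuple bool) F t
  = F (t3 true true true) + F (t3 true true false) + F (t3 true false true) + F (t3 true false false)
  + F (t3 false true true) + F (t3 false true false) + F (t3 false false true) + F (t3 false false false).
Proof.
rewrite big_tuple_cons big_bool /= !big_tuple_cons !big_bool /= !big_tuple_cons !big_bool /= !big_tuple0 /t3.
by rewrite !addrA.
Qed.

Lemma form3 n (lam : 'I_n.+1 -> C) (v : 3.-tuple bool -> C) : (3 <= n)%N ->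
  \sum_(a : 3.-tuple bool) \sum_(b : 3.-tuple bool)
     (v a)^* * ptranspose 1 (ptrace n 3 (dicke_mixture lam)) a b * v b
  = Q (Pv n lam 3 0) (Pv n lam 3 1) (Pv n lam 3 2) (v (t3 false false false))
      (v (t3 true false true) + v (t3 true true false))
    + Q (Pv n lam 3 1) (Pv n lam 3 2) (Pv n lam 3 3)
      (v (t3 false false true) + v (t3 false true false)) (v (t3 true true true))
    + Pv n lam 3 1 * ((v (t3 true false false))^* * v (t3 true false false))
    + Pv n lam 3 2 * ((v (t3 false true true))^* * v (t3 false true true)).
Proof.
move=> n3.
rewrite sum_t3 !sum_t3 /ptranspose /=.
rewrite !ptrace_rho //= /Q /t3 !rmorphD /=.
rewrite !mulr0 !mul0r !addr0 !add0r.
ring.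
Qed.

End S.
Arguments Ecnt {C}.
Arguments Pv {C}.
Arguments Q {C}.

Section S.
Variable C : numClosedFieldType.
Lemma Dn m j : (m.+1)%:R * ('C(m, j)%:R : C) = ((m.+1)%:R - j%:R) * 'C(m.+1, j)%:R.
Proof.
have := mul_bin_down m.+1 j; rewrite /= => E.
case: (leqP j m.+1) => H.
  by rewrite -natrM E natrM natrB.
by rewrite !bin_small ?mulr0 // ltnW.
Qed.

Lemma Dg m j : (m.+1)%:R * ('C(m, j)%:R : C) = (j.+1)%:R * 'C(m.+1, j.+1)%:R.
Proof. by rewrite -!natrM (mul_bin_diag m.+1 j). Qed.

Lemma id20 n i : (2 <= n)%N -> (i <= n)%N ->
  Ecnt n 2 0 i * ((n%:R : C) * (n%:R - 1)) = 'C(n, i)%:R * ((n%:R - i%:R) * (n%:R - i%:R - 1)).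
Proof.
case: n => [|[|m]] // _ _; rewrite /Ecnt /= subn0 (_ : (m.+2 - 2 = m)%N); last by rewrite !subSS subn0.
transitivity ((m.+2)%:R * ((m.+1)%:R * ('C(m, i)%:R : C))); first ring.
rewrite Dn.
transitivity (((m.+1)%:R - i%:R) * ((m.+2)%:R * ('C(m.+1, i)%:R : C))); first ring.
rewrite Dn; ring.
Qed.

Lemma id21 n i : (2 <= n)%N -> (i <= n)%N ->
  Ecnt n 2 1 i * ((n%:R : C) * (n%:R - 1)) = 'C(n, i)%:R * (i%:R * (n%:R - i%:R)).
Proof.
case: n => [|[|m]] // _ _; rewrite /Ecnt; case: i => [|j] /=; first ring.
rewrite subn1 /= (_ : (m.+2 - 2 = m)%N); last by rewrite !subSS subn0.
transitivity ((m.+2)%:R * ((m.+1)%:R * ('C(m, j)%:R : C))); first ring.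
rewrite Dn.
transitivity (((m.+1)%:R - j%:R) * ((m.+2)%:R * ('C(m.+1, j)%:R : C))); first ring.
rewrite Dg; ring.
Qed.

Lemma id22 n i : (2 <= n)%N -> (i <= n)%N ->
  Ecnt n 2 2 i * ((n%:R : C) * (n%:R - 1)) = 'C(n, i)%:R * (i%:R * (i%:R - 1)).
Proof.
case: n => [|[|m]] // _ _; rewrite /Ecnt; case: i => [|[|j]] /=; try ring.
rewrite !subSS !subn0.
transitivity ((m.+2)%:R * ((m.+1)%:R * ('C(m, j)%:R : C))); first ring.
rewrite Dg.
transitivity ((j.+1)%:R * ((m.+2)%:R * ('C(m.+1, j.+1)%:R : C))); first ring.
rewrite Dg; ring.
Qed.

Lemma id30 n i : (3 <= n)%N -> (i <= n)%N ->
  Ecnt n 3 0 i * ((n%:R : C) * (n%:R - 1) * (n%:R - 2))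
  = 'C(n, i)%:R * ((n%:R - i%:R) * (n%:R - i%:R - 1) * (n%:R - i%:R - 2)).
Proof.
case: n => [|[|[|m]]] // _ _; rewrite /Ecnt /= subn0 (_ : (m.+3 - 3 = m)%N); last by rewrite !subSS subn0.
transitivity ((m.+3)%:R * (m.+2)%:R * ((m.+1)%:R * ('C(m, i)%:R : C))); first ring.
rewrite Dn.
transitivity (((m.+1)%:R - i%:R) * (m.+3)%:R * ((m.+2)%:R * ('C(m.+1, i)%:R : C))); first ring.
rewrite Dn.
transitivity (((m.+1)%:R - i%:R) * ((m.+2)%:R - i%:R) * ((m.+3)%:R * ('C(m.+2, i)%:R : C))); first ring.
rewrite Dn; ring.
Qed.

Lemma id31 n i : (3 <= n)%N -> (i <= n)%N ->
  Ecnt n 3 1 i * ((n%:R : C) * (n%:R - 1) * (n%:R - 2))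
  = 'C(n, i)%:R * (i%:R * (n%:R - i%:R) * (n%:R - i%:R - 1)).
Proof.
case: n => [|[|[|m]]] // _ _; rewrite /Ecnt; case: i => [|j] /=; first ring.
rewrite subn1 /= (_ : (m.+3 - 3 = m)%N); last by rewrite !subSS subn0.
transitivity ((m.+3)%:R * (m.+2)%:R * ((m.+1)%:R * ('C(m, j)%:R : C))); first ring.
rewrite Dn.
transitivity (((m.+1)%:R - j%:R) * (m.+3)%:R * ((m.+2)%:R * ('C(m.+1, j)%:R : C))); first ring.
rewrite Dn.
transitivity (((m.+1)%:R - j%:R) * ((m.+2)%:R - j%:R) * ((m.+3)%:R * ('C(m.+2, j)%:R : C))); first ring.
rewrite Dg; ring.
Qed.

Lemma id32 n i : (3 <= n)%N -> (i <= n)%N ->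
  Ecnt n 3 2 i * ((n%:R : C) * (n%:R - 1) * (n%:R - 2))
  = 'C(n, i)%:R * (i%:R * (i%:R - 1) * (n%:R - i%:R)).
Proof.
case: n => [|[|[|m]]] // _ _; rewrite /Ecnt; case: i => [|[|j]] /=; try ring.
rewrite !subSS !subn0.
transitivity ((m.+3)%:R * (m.+2)%:R * ((m.+1)%:R * ('C(m, j)%:R : C))); first ring.
rewrite Dn.
transitivity (((m.+1)%:R - j%:R) * (m.+3)%:R * ((m.+2)%:R * ('C(m.+1, j)%:R : C))); first ring.
rewrite Dg.
transitivity (((m.+1)%:R - j%:R) * (j.+1)%:R * ((m.+3)%:R * ('C(m.+2, j.+1)%:R : C))); first ring.
rewrite Dg; ring.
Qed.

Lemma id33 n i : (3 <= n)%N -> (i <= n)%N ->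
  Ecnt n 3 3 i * ((n%:R : C) * (n%:R - 1) * (n%:R - 2))
  = 'C(n, i)%:R * (i%:R * (i%:R - 1) * (i%:R - 2)).
Proof.
case: n => [|[|[|m]]] // _ _; rewrite /Ecnt; case: i => [|[|[|j]]] /=; try ring.
rewrite !subSS !subn0.
transitivity ((m.+3)%:R * (m.+2)%:R * ((m.+1)%:R * ('C(m, j)%:R : C))); first ring.
rewrite Dg.
transitivity ((j.+1)%:R * (m.+3)%:R * ((m.+2)%:R * ('C(m.+1, j.+1)%:R : C))); first ring.
rewrite Dg.
transitivity ((j.+1)%:R * (j.+2)%:R * ((m.+3)%:R * ('C(m.+2, j.+2)%:R : C))); first ring.
rewrite Dg; ring.
Qed.

Lemma Pv_S n (lam : 'I_n.+1 -> C) k c (f : C -> C) (D : C) : D != 0 ->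
  (forall i : 'I_n.+1, Ecnt n k c i * D = 'C(n, i)%:R * f i%:R) ->
  Pv n lam k c = (\sum_(i < n.+1) f i%:R * lam i) / D.
Proof.
move=> D0 H; rewrite /Pv mulr_suml; apply: eq_bigr => i _.
have Cn : 'C(n, i)%:R != 0 :> C by rewrite pnatr_eq0 -lt0n bin_gt0 -ltnS.
have -> : Ecnt n k c i = 'C(n, i)%:R * f i%:R / D by rewrite -H mulrK // unitfE.
have E (l a g d : C) : a != 0 -> d != 0 -> l * (a^-1 * (a * g / d)) = g * l / d.
  by move=> a0 d0; field; rewrite d0 a0.
exact: E.
Qed.

Lemma Pv_ge0 n (lam : 'I_n.+1 -> C) k c : (forall i, 0 <= lam i) -> 0 <= Pv n lam k c.
Proof.
move=> H; rewrite /Pv; apply: sumr_ge0 => i _; apply: mulr_ge0 => //.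
apply: mulr_ge0; first by rewrite invr_ge0 ler0n.
by rewrite /Ecnt; case: ifP => _ //; rewrite ler0n.
Qed.

Lemma cond_conv (p q r D Sp Sq Sr : C) : 0 < D -> p = Sp / D -> q = Sq / D -> r = Sr / D ->
  (q ^+ 2 <= p * r <-> 0 <= Sp * Sr - Sq ^+ 2).
Proof.
move=> D0 -> -> ->; rewrite -subr_ge0.
have D0' : D != 0 by rewrite gt_eqF.
have -> : Sp / D * (Sr / D) - (Sq / D) ^+ 2 = (Sp * Sr - Sq ^+ 2) * (D^-1 * D^-1) by field.
by rewrite pmulr_lge0 // mulr_gt0 // invr_gt0.
Qed.

Lemma Npos n k : (k < n)%N -> 0 < (n%:R : C) - k%:R.
Proof. by move=> h; rewrite -natrB ?ltr0n ?subn_gt0 // ltnW. Qed.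
End S.
Arguments Pv_S {C}.

Theorem mainTheorem14 (C : numClosedFieldType) (n : nat)
  (lam : 'I_n.+1 -> C)
  (lam_ge0 : forall i, 0 <= lam i)
  (lam_sum : \sum_(i < n.+1) lam i = 1) :
  let rho := @dicke_mixture C n lam in
  let N := (n%:R : C) in
  let S (f : C -> C) := \sum_(i < n.+1) f (i%:R) * lam i in
  ((2 <= n)%N ->
     (@PPT C 2 (@ptrace C n 2 rho) <->
      0 <= S (fun x => (N - x) * (N - x - 1)) * S (fun x => x * (x - 1))
           - (S (fun x => x * (N - x))) ^+ 2)) /\
  ((3 <= n)%N ->
     (@PPT C 3 (@ptrace C n 3 rho) <->
      (0 <= S (fun x => (N - x) * (N - x - 1) * (N - x - 2))
              * S (fun x => x * (x - 1) * (N - x))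
            - (S (fun x => x * (N - x) * (N - x - 1))) ^+ 2) /\
      (0 <= S (fun x => x * (N - x) * (N - x - 1))
              * S (fun x => x * (x - 1) * (x - 2))
            - (S (fun x => x * (x - 1) * (N - x))) ^+ 2))).
Proof.
move=> rho N S; rewrite /rho /N /S {rho N S}.
have P0 k c := Pv_ge0 C n lam k c lam_ge0.
split=> [n2|n3].
  have D0 : 0 < (n%:R : C) * (n%:R - 1).
    rewrite mulr_gt0 //; last exact: (Npos C _ _ n2).
    by rewrite ltr0n ltnW.
  have Dn0 : (n%:R : C) * (n%:R - 1) != 0 by rewrite gt_eqF.
  have E0 := Pv_S n lam 2 0 (fun x => (n%:R - x) * (n%:R - x - 1)) _ Dn0 (fun i => id20 C _ _ n2 (ltn_ord i)).
  have E1 := Pv_S n lam 2 1 (fun x => x * (n%:R - x)) _ Dn0 (fun i => id21 C _ _ n2 (ltn_ord i)).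
  have E2 := Pv_S n lam 2 2 (fun x => x * (x - 1)) _ Dn0 (fun i => id22 C _ _ n2 (ltn_ord i)).
  rewrite -(@cond_conv C _ _ _ _ _ _ _ D0 E0 E1 E2).
  rewrite -(quadP C _ _ _ (P0 2%N 0%N) (P0 2%N 1%N) (P0 2%N 2%N)).
  rewrite /PPT /psd /=.
  split=> [H x y|H v].
    have := H (fun a : 2.-tuple bool => if a == t2 false false then x else if a == t2 true true then y else 0).
    rewrite form2 //=.
    by rewrite conjC0 !mul0r !mulr0 !addr0.
  rewrite form2 //.
  apply: addr_ge0; first apply: addr_ge0; first exact: H.
    by apply: mulr_ge0 => //; exact: cc_ge0.
  by apply: mulr_ge0 => //; exact: cc_ge0.
have D0 : 0 < (n%:R : C) * (n%:R - 1) * (n%:R - 2).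
  rewrite mulr_gt0 //; last exact: (Npos C _ _ n3).
  rewrite mulr_gt0 //; last exact: (Npos C _ _ (ltnW n3)).
  by rewrite ltr0n ltnW // ltnW.
have Dn0 : (n%:R : C) * (n%:R - 1) * (n%:R - 2) != 0 by rewrite gt_eqF.
have E0 := Pv_S n lam 3 0 (fun x => (n%:R - x) * (n%:R - x - 1) * (n%:R - x - 2)) _ Dn0 (fun i => id30 C _ _ n3 (ltn_ord i)).
have E1 := Pv_S n lam 3 1 (fun x => x * (n%:R - x) * (n%:R - x - 1)) _ Dn0 (fun i => id31 C _ _ n3 (ltn_ord i)).
have E2 := Pv_S n lam 3 2 (fun x => x * (x - 1) * (n%:R - x)) _ Dn0 (fun i => id32 C _ _ n3 (ltn_ord i)).
have E3 := Pv_S n lam 3 3 (fun x => x * (x - 1) * (x - 2)) _ Dn0 (fun i => id33 C _ _ n3 (ltn_ord i)).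
have C1 := @cond_conv C _ _ _ _ _ _ _ D0 E0 E1 E2.
have C2 := @cond_conv C _ _ _ _ _ _ _ D0 E1 E2 E3.
have Q1 := quadP C _ _ _ (P0 3%N 0%N) (P0 3%N 1%N) (P0 3%N 2%N).
have Q2 := quadP C _ _ _ (P0 3%N 1%N) (P0 3%N 2%N) (P0 3%N 3%N).
have Q00 p q r : Q p q r (0 : C) 0 = 0 by rewrite /Q !(conjC0, mul0r, mulr0, addr0).
rewrite /PPT /psd /=.
split=> [H|[h1 h2] v].
  split; [apply/C1/Q1 => x y | apply/C2/Q2 => x y].
    have := H (fun a : 3.-tuple bool => if a == t3 false false false then x
                 else if a == t3 true false true then y else 0).
    rewrite form3 //= !(conjC0, mul0r, mulr0, addr0, add0r, Q00).
    by [].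
  have := H (fun a : 3.-tuple bool => if a == t3 false false true then x
               else if a == t3 true true true then y else 0).
  rewrite form3 //= !(conjC0, mul0r, mulr0, addr0, add0r, Q00).
  by [].
have H1 := (proj2 Q1) (proj2 C1 h1).
have H2 := (proj2 Q2) (proj2 C2 h2).
rewrite form3 //.
apply: addr_ge0; first apply: addr_ge0; first apply: addr_ge0.
- exact: H1.
- exact: H2.
- by apply: mulr_ge0 => //; exact: cc_ge0.
- by apply: mulr_ge0 => //; exact: cc_ge0.
Qed.
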